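(* Let $U$ and $V$ be real vector spaces with $\dim(U)=\dim(V)=2$, and let $B\colon U\times U\rightarrow V$ be a symmetric bilinear map with associated quadratic map $Q_B\colon U\rightarrow V$, $Q_B(u)=B(u,u)$. Then $Q_B$ is surjective if and only if $B$ is indefinite.
   Context: For a symmetric bilinear map $B\colon U\times U\rightarrow V$ between real vector spaces, and for each $\lambda\in V^*$, let $\lambda Q_B$ denote the real-valued quadratic form on $U$ given by $\lambda Q_B(u)=\lambda\cdot Q_B(u)$. The map $B$ is called indefinite if for each nonzero $\lambda\in V^*$, the quadratic form $\lambda Q_B$ is neither positive-semidefinite nor negative-semidefinite. *)

(* Defs.v *)
From HB Require Import structures.
From mathcomp Require Import all_boot all_order all_algebra.
From mathcomp Require Import reals.
Set Implicit Arguments. Unset Strict Implicit. Unset Printing Implicit Defensive.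
Import Order.TTheory GRing.Theory Num.Theory.
Local Open Scope ring_scope.

Section Defs.
Variables (R : realType) (U V : vectType R).

(* B is bilinear (linear in the first argument + symmetric, hence also
   linear in the second argument) and symmetric. *)
Definition symmetric_bilinear (B : U -> U -> V) : Prop :=
  (forall (a : R) (x y z : U), B (a *: x + y) z = a *: B x z + B y z) /\
  (forall x y : U, B x y = B y x).

Definition Q_B (B : U -> U -> V) (u : U) : V := B u u.

Definition lin_functional (lam : V -> R) : Prop :=
  forall (a : R) (x y : V), lam (a *: x + y) = a * lam x + lam y.

Definition psd_form (q : U -> R) : Prop := forall u, 0 <= q u.
Definition nsd_form (q : U -> R) : Prop := forall u, q u <= 0.

Definition indefinite (B : U -> U -> V) : Prop :=
  forall lam : V -> R, lin_functional lam -> (exists v, lam v != 0) ->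
    ~ psd_form (fun u => lam (Q_B B u)) /\ ~ nsd_form (fun u => lam (Q_B B u)).
End Defs.

(* Main.v *)
Require Import Defs.
From HB Require Import structures.
From mathcomp Require Import all_boot all_order all_algebra.
From mathcomp Require Import reals.
From mathcomp Require Import ring lra.
Import Order.TTheory GRing.Theory Num.Theory.
Local Open Scope ring_scope.

Lemma sum2_ord (R : realType) (V : vectType R) n (F : 'I_n -> V) (i0 i1 : 'I_n) :
  n = 2%N -> val i0 = 0%N -> val i1 = 1%N -> \sum_i F i = F i0 + F i1.
Proof.
move=> hn; subst n => h0 h1.
rewrite big_ord_recl big_ord_recl big_ord0 addr0.
congr (F _ + F _); apply: val_inj => //=.
Qed.

Lemma dim2_coords (R : realType) (V : vectType R)
  (hV : \dim (fullv : {vspace V}) = 2%N) :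
  exists (c1 c2 : V -> R) (e1 e2 : V),
    [/\ lin_functional c1, lin_functional c2,
        (forall w, w = c1 w *: e1 + c2 w *: e2) &
        [/\ c1 e1 = 1, c1 e2 = 0, c2 e1 = 0 & c2 e2 = 1]].
Proof.
have h0 : (0 < \dim (fullv : {vspace V}))%N by rewrite hV.
have h1 : (1 < \dim (fullv : {vspace V}))%N by rewrite hV.
pose i0 := Ordinal h0; pose i1 := Ordinal h1.
pose X := vbasis (fullv : {vspace V}).
have fX : free X := basis_free (vbasisP _).
exists (coord X i0), (coord X i1), X`_i0, X`_i1; split.
- by move=> a x y; rewrite linearP.
- by move=> a x y; rewrite linearP.
- move=> w; rewrite {1}(coord_vbasis (memvf w)).
  exact: (@sum2_ord _ _ _ (fun i => coord X i w *: X`_i) i0 i1 hV erefl erefl).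
- by rewrite !coord_free.
Qed.


Lemma lf0 (R : realType) (V : vectType R) (lam : V -> R) :
  lin_functional lam -> lam 0 = 0.
Proof.
move=> h; have := h 1 0 0; rewrite scale1r addr0 mul1r => e; lra.
Qed.

Lemma lfD (R : realType) (V : vectType R) (lam : V -> R) :
  lin_functional lam -> forall x y, lam (x + y) = lam x + lam y.
Proof. by move=> h x y; have := h 1 x y; rewrite scale1r mul1r. Qed.

Lemma lfZ (R : realType) (V : vectType R) (lam : V -> R) :
  lin_functional lam -> forall a x, lam (a *: x) = a * lam x.
Proof. by move=> h a x; have := h a x 0; rewrite addr0 lf0 // addr0. Qed.

Lemma B0l (R : realType) (U V : vectType R) (B : U -> U -> V) :
  symmetric_bilinear B -> forall z, B 0 z = 0.
Proof.
move=> [h _] z; have := h 1 0 0 z; rewrite !scale1r addr0 => e.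
have : B 0 z + B 0 z - B 0 z = B 0 z - B 0 z by rewrite -e.
by rewrite addrK subrr.
Qed.

Lemma BZl (R : realType) (U V : vectType R) (B : U -> U -> V) :
  symmetric_bilinear B -> forall k x z, B (k *: x) z = k *: B x z.
Proof.
move=> hB k x z; have := hB.1 k x 0 z; rewrite addr0 B0l // addr0 //.
Qed.

Lemma BDr (R : realType) (U V : vectType R) (B : U -> U -> V) :
  symmetric_bilinear B -> forall k w x y, B w (k *: x + y) = k *: B w x + B w y.
Proof.
by move=> hB k w x y; rewrite hB.2 hB.1 (hB.2 x) (hB.2 y).
Qed.

Arguments B0l {R U V B}.
Arguments BZl {R U V B}.
Arguments BDr {R U V B}.
Arguments lf0 {R V lam}.
Arguments lfD {R V lam}.
Arguments lfZ {R V lam}.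

Lemma QZ (R : realType) (U V : vectType R) (B : U -> U -> V) :
  symmetric_bilinear B -> forall k z, Q_B B (k *: z) = (k * k) *: Q_B B z.
Proof.
by move=> hB k z; rewrite /Q_B (BZl hB) hB.2 (BZl hB) scalerA.
Qed.

Lemma QE (R : realType) (U V : vectType R) (B : U -> U -> V) (lam : V -> R) :
  symmetric_bilinear B -> lin_functional lam -> forall x y a b,
  lam (Q_B B (x *: a + y *: b)) =
    x * x * lam (Q_B B a) + 2 * x * y * lam (B a b) + y * y * lam (Q_B B b).
Proof.
move=> hB hl x y a b; rewrite /Q_B hB.1 (BZl hB) !(BDr hB) (hB.2 b a).
rewrite !(hB.2 _ (y *: b)) !(BZl hB) (hB.2 b a).
rewrite !(lfD hl) !(lfZ hl) !(lfD hl) !(lfZ hl); ring.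
Qed.

Lemma disc (R : realType) (U V : vectType R) (B : U -> U -> V) (lam : V -> R)
  (hB : symmetric_bilinear B) (hl : lin_functional lam) (f1 f2 : U) (d1 d2 : U -> R)
  (hdec : forall u, u = d1 u *: f1 + d2 u *: f2)
  (hnp : ~ psd_form (fun u => lam (Q_B B u)))
  (hnn : ~ nsd_form (fun u => lam (Q_B B u))) :
  lam (Q_B B f1) * lam (Q_B B f2) < lam (B f1 f2) * lam (B f1 f2).
Proof.
have form : forall u, lam (Q_B B u) = d1 u * d1 u * lam (Q_B B f1)
   + 2 * d1 u * d2 u * lam (B f1 f2) + d2 u * d2 u * lam (Q_B B f2).
  by move=> u; rewrite {1}(hdec u) QE.
move: form hnp hnn.
set p := lam (Q_B B f1); set r := lam (B f1 f2); set s := lam (Q_B B f2).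
move=> form hnp hnn.
rewrite ltNge; apply/negP => H.
case: (ltrgtP p 0) => hp.
- apply: hnn => u /=; rewrite form.
  move: (d1 u) (d2 u) => x y.
  have h1 := sqr_ge0 (p * x + r * y); rewrite expr2 in h1.
  have h2 : 0 <= (p * s - r * r) * (y * y) by apply: mulr_ge0; [rewrite subr_ge0 | rewrite -expr2 sqr_ge0].
  nra.
- apply: hnp => u /=; rewrite form.
  move: (d1 u) (d2 u) => x y.
  have h1 := sqr_ge0 (p * x + r * y); rewrite expr2 in h1.
  have h2 : 0 <= (p * s - r * r) * (y * y) by apply: mulr_ge0; [rewrite subr_ge0 | rewrite -expr2 sqr_ge0].
  nra.
- have r0 : r = 0 by rewrite hp mul0r in H; nra.
  case: (lerP 0 s) => hs; [apply: hnp | apply: hnn] => u /=; rewrite form hp r0;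
  move: (d1 u) (d2 u) => x y; nra.
Qed.

Lemma span2 (R : realType) (U : vectType R) (f1 f2 : U) (d1 d2 : U -> R)
  (hdec : forall u, u = d1 u *: f1 + d2 u *: f2) (al be ga de : R) :
  al * de - be * ga != 0 ->
  forall u, exists x y, u = x *: (al *: f1 + be *: f2) + y *: (ga *: f1 + de *: f2).
Proof.
move=> hD u.
exists ((d1 u * de - d2 u * ga) / (al * de - be * ga)).
exists ((al * d2 u - be * d1 u) / (al * de - be * ga)).
rewrite {1}(hdec u) !scalerDr !scalerA addrACA -!scalerDl.
by congr (_ *: _ + _ *: _); field.
Qed.

Lemma key (R : realType) (U V : vectType R) (B : U -> U -> V) (lam mu : V -> R) (v : V)
  (hB : symmetric_bilinear B) (hl : lin_functional lam) (hm : lin_functional mu)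
  (hind : indefinite B) (hlnz : exists w, lam w != 0) (hlv : lam v = 0)
  (hmv : mu v != 0) (z1 z2 : U)
  (hsp : forall u, exists x y, u = x *: z1 + y *: z2)
  (h1 : lam (Q_B B z1) = 0) (h2 : lam (Q_B B z2) = 0) :
  exists z, lam (Q_B B z) = 0 /\ 0 < mu (Q_B B z).
Proof.
case: (ltrP 0 (mu (Q_B B z1))) => m1; first by exists z1.
case: (ltrP 0 (mu (Q_B B z2))) => m2; first by exists z2.
exfalso.
have [k0|k0] := eqVneq (lam (B z1 z2)) 0.
  have [hp _] := hind lam hl hlnz; apply: hp => u /=.
  have [x [y ->]] := hsp u.
  by rewrite QE // h1 h2 k0 !mulr0 !addr0.
pose c := - mu (B z1 z2) / lam (B z1 z2).
pose nu := fun w => mu w + c * lam w.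
have hn : lin_functional nu by move=> a x y; rewrite /nu hl hm; ring.
have hnz : exists w, nu w != 0 by exists v; rewrite /nu hlv mulr0 addr0.
have [_ hq] := hind nu hn hnz; apply: hq => u /=.
have [x [y ->]] := hsp u.
rewrite (QE _ _ _ _ nu) //.
have e : nu (B z1 z2) = 0.
  by rewrite /nu /c divfK // subrr.
rewrite e /nu h1 h2 !mulr0 !addr0.
nra.
Qed.

Theorem proposition1p3 (R : realType) (U V : vectType R)
  (hU : \dim (fullv : {vspace U}) = 2%N) (hV : \dim (fullv : {vspace V}) = 2%N)
  (B : U -> U -> V) (hB : symmetric_bilinear B) :
  (forall v : V, exists u : U, Q_B B u = v) <-> indefinite B.
Proof.
split.
  move=> hs lam hl [w hw].
  have hw2 : 0 < lam w * lam w.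
    by move: hw; rewrite neq_lt => /orP[] h; nra.
  split => h.
    have [u hu] := hs ((- lam w) *: w); have := h u; rewrite /= hu (lfZ hl); lra.
  have [u hu] := hs (lam w *: w); have := h u; rewrite /= hu (lfZ hl); lra.
move=> hind v.
have [->|hv0] := eqVneq v 0.
  by exists 0; rewrite /Q_B (B0l hB).
have [c1 [c2 [e1 [e2 [hc1 hc2 hdec [h11 h12 h21 h22]]]]]] := dim2_coords _ _ hV.
have [d1 [d2 [f1 [f2 [hd1 hd2 hdecU _]]]]] := dim2_coords _ _ hU.
have hN : 0 < c1 v * c1 v + c2 v * c2 v.
  rewrite ltNge; apply/negP => H.
  have a0 : c1 v = 0 by nra.
  have b0 : c2 v = 0 by nra.
  by move: hv0; rewrite (hdec v) a0 b0 !scale0r addr0 eqxx.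
move: hN (hdec v); move: (c1 v) (c2 v) => a b hN hv.
pose lam := fun w => b * c1 w - a * c2 w.
pose mu := fun w => a * c1 w + b * c2 w.
have hl : lin_functional lam by move=> al x y; rewrite /lam hc1 hc2; ring.
have hm : lin_functional mu by move=> al x y; rewrite /mu hc1 hc2; ring.
have hlnz : exists w, lam w != 0.
  have [hb|hb] := eqVneq b 0.
    exists e2; rewrite /lam h12 h22 mulr0 mulr1 sub0r oppr_eq0.
    by apply/eqP => ha; move: hN; rewrite ha hb !mulr0 addr0 ltxx.
  by exists e1; rewrite /lam h11 h21 mulr0 mulr1 subr0.
have hlv : lam v = 0.
  by rewrite /lam hv !(lfD hc1) !(lfD hc2) !(lfZ hc1) !(lfZ hc2) h11 h12 h21 h22; ring.
have hmv : mu v = a * a + b * b.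
  by rewrite /mu hv !(lfD hc1) !(lfD hc2) !(lfZ hc1) !(lfZ hc2) h11 h12 h21 h22; ring.
have hker : forall w, lam w = 0 -> (a * a + b * b) *: w = mu w *: v.
  move=> w hw; rewrite {1}(hdec w) hv !scalerDr !scalerA.
  congr (_ *: _ + _ *: _).
    apply/eqP; rewrite -subr_eq0; apply/eqP.
    by transitivity (b * lam w); [rewrite /lam /mu; ring | rewrite hw mulr0].
  apply/eqP; rewrite -subr_eq0; apply/eqP.
  by transitivity (- a * lam w); [rewrite /lam /mu; ring | rewrite hw mulr0].
have [hnp hnn] := hind lam hl hlnz.
have hdisc := disc _ _ _ _ _ hB hl _ _ _ _ hdecU hnp hnn.
have [z1 [z2 [hsp [hz1 hz2]]]] : exists z1 z2,
    (forall u, exists x y, u = x *: z1 + y *: z2) /\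
    lam (Q_B B z1) = 0 /\ lam (Q_B B z2) = 0.
  move: hdisc.
  set p := lam (Q_B B f1); set r := lam (B f1 f2); set s := lam (Q_B B f2).
  move=> hdisc.
  pose D := r * r - p * s.
  have hD : 0 < D by rewrite /D subr_gt0.
  pose d := Num.sqrt D.
  have hd : d * d = D by rewrite -expr2 sqr_sqrtr // ltW.
  have dpos : 0 < d by rewrite sqrtr_gt0.
  have [hp0|hp0] := eqVneq p 0.
    exists (1 *: f1 + 0 *: f2), ((- s) *: f1 + (2 * r) *: f2); split.
      apply: span2 hdecU _ _ _ _ _.
      have hr : r != 0 by apply/eqP => hr; move: hdisc; rewrite hp0 hr !mul0r ltxx.
      apply/eqP => H; have : 2 * r = 0 by rewrite -H; ring.
      by move/eqP; rewrite mulf_eq0 (negbTE hr) orbF pnatr_eq0.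
    by split; rewrite QE // -/p -/r -/s hp0; ring.
  exists ((d - r) *: f1 + p *: f2), ((- d - r) *: f1 + p *: f2); split.
    apply: span2 hdecU _ _ _ _ _.
    apply/eqP => H; have ee : 2 * d * p = 0 by rewrite -H; ring.
    by move/eqP: ee; rewrite !mulf_eq0 pnatr_eq0 (gt_eqF dpos) (negbTE hp0).
  split; rewrite QE // -/p -/r -/s.
    transitivity (p * (d * d - D)); first by rewrite /D; ring.
    by rewrite hd subrr mulr0.
  transitivity (p * (d * d - D)); first by rewrite /D; ring.
  by rewrite hd subrr mulr0.
have hmv' : mu v != 0 by rewrite hmv gt_eqF.
have [z [hz0 hzp]] := key _ _ _ _ _ _ _ hB hl hm hind hlnz hlv hmv' _ _ hsp hz1 hz2.
have hQz := hker _ hz0.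
exists (Num.sqrt ((a * a + b * b) / mu (Q_B B z)) *: z).
rewrite (QZ _ _ _ _ hB) -expr2 sqr_sqrtr; last by rewrite divr_ge0 // ltW.
by rewrite mulrC -scalerA hQz scalerA mulVf ?scale1r // gt_eqF.
Qed.
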